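(* Let $A$ be a meet-semilattice and $\kappa$ a regular cardinal. Then $A$ is a complete lattice that is a $\kappa$-frame if and only if $\mathcal{BL}_\kappa(\mathcal{DM} A)=A$.
   Context: $\mathcal{DM} A$ is the complete lattice of normal ideals of $A$. An existing join $\bigvee S$ is distributive if $a\wedge\bigvee S=\bigvee\{a\wedge s:s\in S\}$ for all $a$. $\mathcal{BL} A$ is the frame of D-ideals of $A$ (downsets containing $\bigvee S$ for every subset $S$ with distributive join), and $A$ is identified with $\{{\downarrow}a:a\in A\}\subseteq\mathcal{DM} A\subseteq\mathcal{BL} A$. $\mathcal{BL}_\kappa(\mathcal{DM} A)$ is the sub-$\kappa$-frame of $\mathcal{BL} A$ generated by $\mathcal{DM} A$ (closure under finite meets and joins of fewer than $\kappa$ elements computed in $\mathcal{BL} A$). A $\kappa$-frame is a meet-semilattice in which all joins of fewer than $\kappa$ elements exist and are distributive. *)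

(* Defs.v *)
(* Subsets are
   predicates A -> Prop. Cardinals are represented by types. *)

Section Defs.
Context {A : Type} (le : A -> A -> Prop).

Definition partial_order : Prop :=
  (forall x, le x x) /\
  (forall x y, le x y -> le y x -> x = y) /\
  (forall x y z, le x y -> le y z -> le x z).

Definition upper_bound (S : A -> Prop) (u : A) : Prop := forall s, S s -> le s u.
Definition lower_bound (S : A -> Prop) (l : A) : Prop := forall s, S s -> le l s.

Definition is_lub (S : A -> Prop) (j : A) : Prop :=
  upper_bound S j /\ forall u, upper_bound S u -> le j u.

Definition is_meet (a b m : A) : Prop :=
  le m a /\ le m b /\ forall l, le l a -> le l b -> le l m.

Definition meet_semilattice : Prop :=
  partial_order /\ forall a b, exists m, is_meet a b m.

Definition complete_lattice : Prop :=
  forall S : A -> Prop, exists j, is_lub S j.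

Definition distributive_join (S : A -> Prop) (j : A) : Prop :=
  forall a m, is_meet a j m ->
    is_lub (fun x => exists s, S s /\ is_meet a s x) m.

Definition downset (D : A -> Prop) : Prop := forall x y, le x y -> D y -> D x.

Definition principal (a : A) : A -> Prop := fun x => le x a.

(* normal ideals: I = (I^u)^l ; the elements of DM A *)
Definition normal_ideal (I : A -> Prop) : Prop :=
  forall x, I x <-> (forall u, upper_bound I u -> le x u).

(* D-ideals: the elements of BL A *)
Definition D_ideal (D : A -> Prop) : Prop :=
  downset D /\
  forall (S : A -> Prop) (j : A),
    (forall s, S s -> D s) -> is_lub S j -> distributive_join S j -> D j.

(* join in BL A of a family of D-ideals: the least D-ideal containing the union *)
Definition BL_join {I : Type} (F : I -> A -> Prop) : A -> Prop :=
  fun x => forall D, D_ideal D -> (forall i y, F i y -> D y) -> D x.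

End Defs.

Definition card_lt (X Y : Type) : Prop :=
  (exists f : X -> Y, forall x1 x2, f x1 = f x2 -> x1 = x2) /\
  ~ (exists g : Y -> X, forall y1 y2, g y1 = g y2 -> y1 = y2).

Definition regular_cardinal (K : Type) : Prop :=
  (exists f : nat -> K, forall n m, f n = f m -> n = m) /\
  forall (I : Type) (X : I -> Type),
    card_lt I K -> (forall i, card_lt (X i) K) -> card_lt {i : I & X i} K.

Definition kappa_frame {A : Type} (le : A -> A -> Prop) (K : Type) : Prop :=
  meet_semilattice le /\
  forall S : A -> Prop, card_lt {x : A | S x} K ->
    (exists j, is_lub le S j) /\ (forall j, is_lub le S j -> distributive_join le S j).

(* BL_kappa(DM A): the sub-kappa-frame of BL A generated by DM A, i.e. the
   closure of DM A under binary meets (intersections) and joins in BL A of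
   families of fewer than kappa elements (stated up to extensional equality
   of subsets). *)
Inductive BLk_DM {A : Type} (le : A -> A -> Prop) (K : Type) : (A -> Prop) -> Prop :=
| BLk_base : forall I, normal_ideal le I -> BLk_DM le K I
| BLk_meet : forall I J, BLk_DM le K I -> BLk_DM le K J ->
    BLk_DM le K (fun x => I x /\ J x)
| BLk_join : forall (Ix : Type) (F : Ix -> A -> Prop), card_lt Ix K ->
    (forall i, BLk_DM le K (F i)) -> BLk_DM le K (BL_join le F)
| BLk_ext : forall I J, BLk_DM le K I -> (forall x, I x <-> J x) -> BLk_DM le K J.

(* Main.v *)
Require Import Defs.
From Stdlib Require Import ClassicalEpsilon ProofIrrelevance.

Section Aux.
Context {A : Type} (le : A -> A -> Prop).
Hypothesis refl : forall x, le x x.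
Hypothesis antisym : forall x y, le x y -> le y x -> x = y.
Hypothesis trans : forall x y z, le x y -> le y z -> le x z.

Lemma principal_D (b : A) : D_ideal le (principal le b).
Proof.
  split.
  - intros x y Hxy Hy. exact (trans _ _ _ Hxy Hy).
  - intros S j HS [_ Hj] _. apply Hj. intros s Hs. apply HS, Hs.
Qed.

Lemma principal_normal (a : A) : normal_ideal le (principal le a).
Proof.
  intro x; split.
  - intros Hx u Hu. exact (trans _ _ _ Hx (Hu a (refl a))).
  - intros H. apply H. intros s Hs. exact Hs.
Qed.

Lemma card_sub (K Ix : Type) (S : A -> Prop) (g : {x | S x} -> Ix) :
  (forall p q, g p = g q -> p = q) -> card_lt Ix K -> card_lt {x | S x} K.
Proof.
  intros gi [[f fi] nf]. split.
  - exists (fun p => f (g p)). intros p q E. apply gi, fi, E.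
  - intros [h hi]. apply nf. exists (fun k => g (h k)).
    intros k1 k2 E. apply hi, gi, E.
Qed.
End Aux.

Theorem theorem4p14 (A : Type) (le : A -> A -> Prop) (K : Type) :
  meet_semilattice le -> regular_cardinal K ->
  ((complete_lattice le /\ kappa_frame le K) <->
   (forall I : A -> Prop, BLk_DM le K I <-> exists a : A, forall x, I x <-> principal le a x)).
Proof.
  intros [PO MS] _. pose proof PO as PO'. destruct PO' as [refl [antisym trans]].
  split.
  - intros [CL [_ KF]] I. split.
    + intro H. induction H.
      * destruct (CL I) as [j [Hj1 Hj2]]. exists j. intro x. split.
        -- intro Hx. apply Hj1, Hx.
        -- intro Hx. apply (proj2 (H x)). intros u Hu. exact (trans _ _ _ Hx (Hj2 u Hu)).
      * destruct IHBLk_DM1 as [a Ha], IHBLk_DM2 as [b Hb].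
        destruct (MS a b) as [m [m1 [m2 m3]]]. exists m. intro x.
        rewrite Ha, Hb. unfold principal. split.
        -- intros [H1 H2]. apply m3; assumption.
        -- intro Hx. split; eauto.
      * set (S := fun x => exists i, forall y, F i y <-> le y x).
        set (g := fun p : {x | S x} => proj1_sig (constructive_indefinite_description _ (proj2_sig p))).
        assert (gi : forall p q, g p = g q -> p = q).
        { intros [x Hx] [y Hy]. unfold g; simpl.
          destruct (constructive_indefinite_description _ Hx) as [i Hi].
          destruct (constructive_indefinite_description _ Hy) as [i' Hi'].
          simpl. intro E. subst i'.
          assert (x = y) as <-.
          { apply antisym.
            - apply (proj1 (Hi' x)), (proj2 (Hi x)), refl.
            - apply (proj1 (Hi y)), (proj2 (Hi' y)), refl. }
          f_equal. apply proof_irrelevance. }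
        pose proof (card_sub K Ix S g gi H) as HS.
        destruct (KF S HS) as [_ Hd].
        destruct (CL S) as [j Hj].
        exists j. intro x. split.
        -- intro Hx. apply Hx.
           ++ apply principal_D; assumption.
           ++ intros i y Hy. destruct (H1 i) as [a Ha].
              apply (trans _ a). apply Ha, Hy. apply (proj1 Hj). exists i. exact Ha.
        -- intros Hx D HD HF. apply (proj1 HD x j Hx).
           apply (proj2 HD S j); [|exact Hj|exact (Hd j Hj)].
           intros s [i Hi]. apply (HF i). apply Hi, refl.
      * destruct IHBLk_DM as [a Ha]. exists a. intro x. rewrite <- H0. apply Ha.
    + intros [a Ha]. apply BLk_ext with (principal le a).
      * apply BLk_base. apply principal_normal; assumption.
      * intro x. rewrite Ha. tauto.
  - intro H.
    assert (CL : complete_lattice le).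
    { intro S.
      set (I := fun x => forall u, upper_bound le S u -> le x u).
      assert (NI : normal_ideal le I).
      { intro x; split.
        - intros Hx u Hu. apply Hx. intros s Hs. apply Hu. intros v Hv. apply Hv, Hs.
        - intros Hx u Hu. apply Hx. intros y Hy. apply Hy, Hu. }
      destruct (proj1 (H I) (BLk_base le K I NI)) as [a Ha].
      exists a. split.
      - intros s Hs. apply (proj1 (Ha s)). intros u Hu. apply Hu, Hs.
      - intros u Hu. apply (proj2 (Ha a) (refl a)), Hu. }
    split; [exact CL|]. split; [split; assumption|].
    intros S HS. split; [apply CL|].
    intros j Hj a m Hm. split.
    + intros x [s [Hs Hx]]. destruct Hx as [x1 [x2 x3]]. destruct Hm as [m1 [m2 m3]].
      apply m3; [exact x1|]. apply (trans _ s); [exact x2|]. apply (proj1 Hj), Hs.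
    + intros u Hu.
      set (F := fun p : {x | S x} => principal le (proj1_sig p)).
      assert (HB : BLk_DM le K (BL_join le F)).
      { apply BLk_join; [exact HS|]. intro p. apply BLk_base.
        exact (principal_normal le refl trans (proj1_sig p)). }
      destruct (proj1 (H _) HB) as [b Hb].
      assert (Hjb : le j b).
      { apply (proj2 Hj). intros s Hs. apply (proj1 (Hb s)).
        intros D HD HF. apply (HF (exist _ s Hs)). apply refl. }
      assert (Hbj : BL_join le F j).
      { apply (proj2 (Hb j)). exact Hjb. }
      set (D := fun x => forall mx, is_meet le a x mx -> le mx u).
      assert (HD : D_ideal le D).
      { split.
        - intros x y Hxy Hy mx Hmx. destruct (MS a y) as [my Hmy].
          apply (trans _ my); [|apply Hy, Hmy].
          destruct Hmx as [x1 [x2 x3]]. destruct Hmy as [y1 [y2 y3]].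
          apply y3; [exact x1|]. exact (trans _ _ _ x2 Hxy).
        - intros T t HT Ht Hdt mt Hmt.
          apply (proj2 (Hdt a mt Hmt)). intros x [t' [Ht' Hx]].
          apply (HT t' Ht' x Hx). }
      apply (Hbj D HD).
      * intros [s Hs] y Hy mx Hmx. simpl in Hy. unfold principal in Hy.
        destruct (MS a s) as [ms Hms].
        apply (trans _ ms).
        -- destruct Hmx as [x1 [x2 x3]]. destruct Hms as [y1 [y2 y3]].
           apply y3; [exact x1|]. exact (trans _ _ _ x2 Hy).
        -- apply Hu. exists s. split; assumption.
      * exact Hm.
Qed.
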